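(* Let $n$ be a positive integer, $k$ an integer with $0\le k\le n$, and $0<\phi<\infty$, and let $R\sim \mathrm{Spillage}(n,k,\phi)$. For integers $\ell\ge 0$ set $H_\ell = \phi^\ell\, S(n-\ell,k,\phi)/S(n,k,\phi)$. Then $$\mathbb{E}(R) = (n-k) - nH_1,\qquad \mathbb{V}(R) = nH_1 - n^2H_1^2 + n(n-1)H_2,$$ and, whenever $\mathbb{V}(R)>0$ (so that skewness and kurtosis are defined), $$\mathrm{Skew}(R) = \frac{-nH_1 + 3n^2H_1^2 - 3n(n-1)H_2 - 2n^3H_1^3 + 3n^2(n-1)H_1H_2 - n(n-1)(n-2)H_3}{[nH_1 - n^2H_1^2 + n(n-1)H_2]^{3/2}},$$ $$\mathrm{Kurt}(R) = 3 + \frac{\begin{aligned}&nH_1 - 7n^2H_1^2 + 7n(n-1)H_2 + 12n^3H_1^3 - 18n^2(n-1)H_1H_2 + 6n(n-1)(n-2)H_3\\ &- 6n^4H_1^4 + 12n^3(n-1)H_1^2H_2 - 3n^2(n-1)^2H_2^2 - 4n^2(n-1)(n-2)H_1H_3 + n(n-1)(n-2)(n-3)H_4\end{aligned}}{[nH_1 - n^2H_1^2 + n(n-1)H_2]^2}.$$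
   Context: $S(j,k)$ denotes the (central) Stirling numbers of the second kind. The noncentral Stirling numbers of the second kind are $S(n,k,\phi) = \sum_{r=0}^{n-k}\binom{n}{k+r}\phi^{n-k-r}S(k+r,k)$, with $S(n',k,\phi)=0$ for $n'<k$. The spillage distribution $\mathrm{Spillage}(n,k,\phi)$ is the distribution on $\{0,\dots,n-k\}$ with mass function $\mathrm{Spillage}(r\mid n,k,\phi) = \binom{n}{k+r}\phi^{n-k-r}S(k+r,k)/S(n,k,\phi)$. Skewness is $\mathbb{E}[(R-\mathbb{E}R)^3]/\mathbb{V}(R)^{3/2}$ and kurtosis is $\mathbb{E}[(R-\mathbb{E}R)^4]/\mathbb{V}(R)^2$. *)

(* Defs.v *)
From mathcomp Require Import all_boot all_order all_algebra.
Set Implicit Arguments. Unset Strict Implicit. Unset Printing Implicit Defensive.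
Import Order.TTheory GRing.Theory Num.Theory.
Local Open Scope ring_scope.

Fixpoint stirling2 (j k : nat) : nat :=
  match j, k with
  | 0, 0 => 1
  | 0, _.+1 => 0
  | _.+1, 0 => 0
  | j'.+1, k'.+1 => (k'.+1 * stirling2 j' k'.+1 + stirling2 j' k')%N
  end.

Section Spillage.
Variable R : rcfType.

Definition ncstirling (n k : nat) (phi : R) : R :=
  if (n < k)%N then 0 else
  \sum_(r < (n - k).+1) 'C(n, k + r)%:R * phi ^+ (n - k - r) * (stirling2 (k + r) k)%:R.

Definition spillage_pmf (n k : nat) (phi : R) (r : nat) : R :=
  'C(n, k + r)%:R * phi ^+ (n - k - r) * (stirling2 (k + r) k)%:R / ncstirling n k phi.

Definition spill_E (n k : nat) (phi : R) (g : nat -> R) : R :=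
  \sum_(r < (n - k).+1) g r * spillage_pmf n k phi r.

Definition spill_mean n k phi : R := spill_E n k phi (fun r => r%:R).
Definition spill_cmoment n k phi (m : nat) : R :=
  spill_E n k phi (fun r => (r%:R - spill_mean n k phi) ^+ m).
Definition spill_var n k phi : R := spill_cmoment n k phi 2.
(* V^{3/2} written as (sqrt V)^3 *)
Definition spill_skew n k phi : R :=
  spill_cmoment n k phi 3 / (Num.sqrt (spill_var n k phi)) ^+ 3.
Definition spill_kurt n k phi : R :=
  spill_cmoment n k phi 4 / (spill_var n k phi) ^+ 2.

(* H_l = phi^l S(n-l,k,phi)/S(n,k,phi); S(n-l,k,phi) = 0 when n - l < 0 (as integers). *)
Definition spill_H (n k : nat) (phi : R) (l : nat) : R :=
  if (l <= n)%N then phi ^+ l * ncstirling (n - l) k phi / ncstirling n k phi else 0.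

End Spillage.

(* Main.v *)
Require Import Defs.
From mathcomp Require Import all_boot all_order all_algebra.
From mathcomp Require Import zify ring lra.
Import Order.TTheory GRing.Theory Num.Theory.
Local Open Scope ring_scope.

Lemma bin_ffact_shift (n j l : nat) :
  ('C(n, j) * (n - j) ^_ l = n ^_ l * 'C(n - l, j))%N.
Proof.
elim: l => [|l IH]; first by rewrite ffactn0 muln1 mul1n subn0.
rewrite ffactnSr mulnA IH ffactnSr -mulnA -mulnA; congr (_ * _)%N.
have -> : (n - j - l = n - l - j)%N by lia.
by rewrite mulnC -mul_bin_down subnS.
Qed.

Fixpoint ff {R : ringType} (x : R) (l : nat) : R :=
  if l is l'.+1 then x * ff (x - 1) l' else 1.

Lemma ff_nat (R : ringType) (l m : nat) : ((m ^_ l)%:R : R) = ff (m%:R) l.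
Proof.
elim: l m => [|l IH] [|m] //=.
- by rewrite ffact0n /= mul0r.
- by rewrite ffactSS natrM IH -natr1 addrK.
Qed.

Lemma sumF (R : rcfType) (n k : nat) (phi : R) (l : nat) : (k <= n)%N ->
  \sum_(r < (n - k).+1) ff ((n - k - r)%:R : R) l *
     ('C(n, k + r)%:R * phi ^+ (n - k - r) * (stirling2 (k + r) k)%:R)
  = (n ^_ l)%:R * phi ^+ l * ncstirling (n - l) k phi.
Proof.
move=> hk.
have E : forall r : 'I_(n - k).+1,
   ff ((n - k - r)%:R : R) l *
     ('C(n, k + r)%:R * phi ^+ (n - k - r) * (stirling2 (k + r) k)%:R)
   = (n ^_ l * 'C(n - l, k + r))%:R * phi ^+ (n - k - r) * (stirling2 (k + r) k)%:R.
  move=> r; rewrite -ff_nat -bin_ffact_shift natrM !mulrA; congr (_ * _ * _).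
  by rewrite mulrC subnDA.
rewrite (eq_bigr _ (fun r _ => E r)) {E}.
case: (leqP (l + k) n) => hlk.
- rewrite /ncstirling ifF; last by apply/negbTE; rewrite -leqNgt; lia.
  rewrite mulr_sumr.
  rewrite -(big_mkord xpredT (fun r => (n ^_ l * 'C(n - l, k + r))%:R * phi ^+ (n - k - r) * (stirling2 (k + r) k)%:R)).
  rewrite (big_cat_nat _ (n := (n - l - k).+1)) //=; last by lia.
  rewrite [X in _ + X]big1_seq ?addr0; last first.
    move=> i; rewrite mem_index_iota => /andP[h1 h2].
    by rewrite bin_small ?muln0 ?mul0r //; lia.
  rewrite big_mkord; apply: eq_bigr => i _.
  have hi := ltn_ord i.
  rewrite natrM -!mulrA; congr (_ * _); rewrite [RHS]mulrC -!mulrA; congr (_ * _).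
  rewrite [RHS]mulrCA [RHS]mulrC -exprD; congr (_ ^+ _ * _); lia.
- have -> : (n ^_ l)%:R * phi ^+ l * ncstirling (n - l) k phi = 0.
    case: (leqP l n) => hl.
      by rewrite /ncstirling ifT ?mulr0 //; lia.
    by rewrite ffact_small // !mul0r.
  apply: big1 => i _.
  case: (leqP l n) => hl.
    by rewrite bin_small ?muln0 ?mul0r //; lia.
  by rewrite ffact_small // !mul0r.
Qed.

Lemma stirling2_small j k : (j < k)%N -> stirling2 j k = 0%N.
Proof.
elim: j k => [|j IH] [|k] //= h.
by rewrite !IH ?muln0 //; lia.
Qed.

Lemma stirling2_diag k : stirling2 k k = 1%N.
Proof. by elim: k => [|k IH] //=; rewrite stirling2_small // muln0 IH. Qed.

Lemma ncst_pos (R : rcfType) (n k : nat) (phi : R) :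
  (k <= n)%N -> 0 < phi -> 0 < ncstirling n k phi.
Proof.
move=> hk hphi; rewrite /ncstirling ifF; last by apply/negbTE; rewrite -leqNgt.
rewrite big_ord_recl /= addn0 subn0 stirling2_diag mulr1.
apply: ltr_wpDr.
  apply: sumr_ge0 => i _; apply: mulr_ge0; last exact: ler0n.
  by apply: mulr_ge0; [exact: ler0n| apply: exprn_ge0; exact: ltW].
by apply: mulr_gt0; [rewrite ltr0n bin_gt0 | exact: exprn_gt0].
Qed.

Lemma E5 (R : rcfType) n k (phi : R) c0 c1 c2 c3 c4 f0 f1 f2 f3 f4 :
  spill_E n k phi (fun r => c0 * f0 r + c1 * f1 r + c2 * f2 r + c3 * f3 r + c4 * f4 r)
  = c0 * spill_E n k phi f0 + c1 * spill_E n k phi f1 + c2 * spill_E n k phi f2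
    + c3 * spill_E n k phi f3 + c4 * spill_E n k phi f4.
Proof.
rewrite /spill_E !mulr_sumr -!big_split; apply: eq_bigr => i _ /=; ring.
Qed.

Lemma E_eq (R : rcfType) n k (phi : R) g h :
  (forall r, (r <= n - k)%N -> g r = h r) -> spill_E n k phi g = spill_E n k phi h.
Proof.
move=> e; rewrite /spill_E; apply: eq_bigr => i _; rewrite e //.
by have := ltn_ord i; rewrite ltnS.
Qed.

Lemma Gl (R : rcfType) n k (phi : R) l : (k <= n)%N -> 0 < phi ->
  spill_E n k phi (fun r => ff ((n - k - r)%:R : R) l) = ff (n%:R) l * spill_H n k phi l.
Proof.
move=> hk hphi.
rewrite /spill_E /spillage_pmf.
under eq_bigr do rewrite mulrA.
rewrite -mulr_suml sumF // /spill_H -ff_nat.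
case: (leqP l n) => hl; first by rewrite !mulrA.
by rewrite ffact_small // !mul0r.
Qed.

Lemma H0 (R : rcfType) n k (phi : R) : (k <= n)%N -> 0 < phi -> spill_H n k phi 0 = 1.
Proof.
move=> hk hphi; rewrite /spill_H /= expr0 mul1r subn0 divff //.
by apply: lt0r_neq0; apply: (@ncst_pos R n k phi).
Qed.

Theorem theorem2 (R : rcfType) (n k : nat) (phi : R)
    (hn : (0 < n)%N) (hk : (k <= n)%N) (hphi : 0 < phi) :
  let H := spill_H n k phi in
  let N := (n%:R : R) in
  let D := N * H 1%N - N ^+ 2 * H 1%N ^+ 2 + N * (N - 1) * H 2%N in
  spill_mean n k phi = (n - k)%:R - N * H 1%N /\
  spill_var n k phi = D /\
  (0 < spill_var n k phi ->
   spill_skew n k phi =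
     (- N * H 1%N + 3 * N ^+ 2 * H 1%N ^+ 2 - 3 * N * (N - 1) * H 2%N
      - 2 * N ^+ 3 * H 1%N ^+ 3 + 3 * N ^+ 2 * (N - 1) * H 1%N * H 2%N
      - N * (N - 1) * (N - 2) * H 3%N) / (Num.sqrt D) ^+ 3 /\
   spill_kurt n k phi =
     3 + (N * H 1%N - 7 * N ^+ 2 * H 1%N ^+ 2 + 7 * N * (N - 1) * H 2%N
          + 12 * N ^+ 3 * H 1%N ^+ 3 - 18 * N ^+ 2 * (N - 1) * H 1%N * H 2%N
          + 6 * N * (N - 1) * (N - 2) * H 3%N
          - 6 * N ^+ 4 * H 1%N ^+ 4 + 12 * N ^+ 3 * (N - 1) * H 1%N ^+ 2 * H 2%N
          - 3 * N ^+ 2 * (N - 1) ^+ 2 * H 2%N ^+ 2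
          - 4 * N ^+ 2 * (N - 1) * (N - 2) * H 1%N * H 3%N
          + N * (N - 1) * (N - 2) * (N - 3) * H 4%N) / D ^+ 2).
Proof.
cbv zeta.
set a : R := (n - k)%:R.
set X := fun r : nat => ((n - k - r)%:R : R).
set H := spill_H n k phi.
set N : R := n%:R.
have G : forall l, spill_E n k phi (fun r => ff (X r) l) = ff N l * H l.
  by move=> l; exact: (@Gl R n k phi l hk hphi).
have G0 : H 0%N = 1 by exact: (@H0 R n k phi hk hphi).
have hr : forall r, (r <= n - k)%N -> (r%:R : R) = a - X r.
  by move=> r h; rewrite /X natrB // /a opprB addrC subrK.
have hm : spill_mean n k phi = a - N * H 1%N.
  rewrite /spill_mean.
  rewrite (@E_eq R n k phi _ (fun r => a * ff (X r) 0 + (-1) * ff (X r) 1 + 0 * ff (X r) 2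
      + 0 * ff (X r) 3 + 0 * ff (X r) 4)); last first.
    by move=> r h; rewrite (hr r h) /=; ring.
  rewrite E5 !G G0 /=; ring.
set m := spill_mean n k phi in hm *.
set c := a - m.
have hc : c = N * H 1%N by rewrite /c hm; ring.
have hv : spill_var n k phi = N * H 1%N - N ^+ 2 * H 1%N ^+ 2 + N * (N - 1) * H 2%N.
  rewrite /spill_var /spill_cmoment -/m.
  rewrite (@E_eq R n k phi _ (fun r => c ^+ 2 * ff (X r) 0 + (1 - 2 * c) * ff (X r) 1
      + 1 * ff (X r) 2 + 0 * ff (X r) 3 + 0 * ff (X r) 4)); last first.
    by move=> r h; rewrite (hr r h) /c /=; ring.
  rewrite E5 !G G0 hc /=; ring.
have h3 : spill_cmoment n k phi 3 =
     (- N * H 1%N + 3 * N ^+ 2 * H 1%N ^+ 2 - 3 * N * (N - 1) * H 2%N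
      - 2 * N ^+ 3 * H 1%N ^+ 3 + 3 * N ^+ 2 * (N - 1) * H 1%N * H 2%N
      - N * (N - 1) * (N - 2) * H 3%N).
  rewrite /spill_cmoment -/m.
  rewrite (@E_eq R n k phi _ (fun r => c ^+ 3 * ff (X r) 0 + (-3 * c ^+ 2 + 3 * c - 1) * ff (X r) 1
      + (3 * c - 3) * ff (X r) 2 + (-1) * ff (X r) 3 + 0 * ff (X r) 4)); last first.
    by move=> r h; rewrite (hr r h) /c /=; ring.
  rewrite E5 !G G0 hc /=; ring.
have h4 : spill_cmoment n k phi 4 =
     3 * (N * H 1%N - N ^+ 2 * H 1%N ^+ 2 + N * (N - 1) * H 2%N) ^+ 2 +
         (N * H 1%N - 7 * N ^+ 2 * H 1%N ^+ 2 + 7 * N * (N - 1) * H 2%N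
          + 12 * N ^+ 3 * H 1%N ^+ 3 - 18 * N ^+ 2 * (N - 1) * H 1%N * H 2%N
          + 6 * N * (N - 1) * (N - 2) * H 3%N
          - 6 * N ^+ 4 * H 1%N ^+ 4 + 12 * N ^+ 3 * (N - 1) * H 1%N ^+ 2 * H 2%N
          - 3 * N ^+ 2 * (N - 1) ^+ 2 * H 2%N ^+ 2
          - 4 * N ^+ 2 * (N - 1) * (N - 2) * H 1%N * H 3%N
          + N * (N - 1) * (N - 2) * (N - 3) * H 4%N).
  rewrite /spill_cmoment -/m.
  rewrite (@E_eq R n k phi _ (fun r => c ^+ 4 * ff (X r) 0
      + (-4 * c ^+ 3 + 6 * c ^+ 2 - 4 * c + 1) * ff (X r) 1
      + (6 * c ^+ 2 - 12 * c + 7) * ff (X r) 2 + (-4 * c + 6) * ff (X r) 3 + 1 * ff (X r) 4)); last first.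
    by move=> r h; rewrite (hr r h) /c /=; ring.
  rewrite E5 !G G0 hc /=; ring.
split; first exact: hm.
split; first exact: hv.
move=> hpos; split.
  by rewrite /spill_skew h3 hv.
rewrite /spill_kurt h4 hv.
rewrite hv in hpos.
have hD := lt0r_neq0 hpos.
field; apply: contra_neq hD => e; rewrite -[RHS]e /N; ring.
Qed.
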